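(* Let $k=2$, $0<\theta<1/3$ and $\lambda>\frac{9}{4(1-3\theta)}$. Then every family $(z_{1,i},z_{2,i})_{i\in\mathbb{T}^2}$ of positive numbers satisfying, for all $i$, $z_{1,i}=\lambda\prod_{j\in S(i)}F(z_{1,j},z_{2,j},\theta)$ and $z_{2,i}=\lambda\prod_{j\in S(i)}F(z_{2,j},z_{1,j},\theta)$ satisfies $x_1^*\le z_{j,i}\le x_2^*$ for $j=1,2$ and all $i\in\mathbb{T}^2$.
   Context: $\mathbb{T}^2$ is the rooted binary Cayley tree (each vertex has $2$ direct successors; $S(i)$ is the set of direct successors of $i$). $F(x,y,\theta)=\frac{1+x+\theta y}{1+x+y}$. Under the stated conditions, the system $x=\lambda F(x,y,\theta)^2$, $y=\lambda F(y,x,\theta)^2$ has exactly three positive solutions $(x^*,x^* )$, $(x_1^*,x_2^* )$, $(x_2^*,x_1^* )$, where $x_1^*<x_2^*$. *)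

(* Defs.v *)
From Stdlib Require Import Reals List.
Open Scope R_scope.

Definition F (x y theta : R) : R := (1 + x + theta * y) / (1 + x + y).

(* The rooted binary Cayley tree T^2: a vertex is the (finite) word of
   left/right choices leading to it from the root (root = nil).
   The direct successors of i are (true :: i) and (false :: i). *)
Definition vertex := list bool.
Definition S (i : vertex) : list vertex := (true :: i) :: (false :: i) :: nil.

Definition prod_succ (f : vertex -> R) (i : vertex) : R :=
  fold_right Rmult 1 (map f (S i)).

(* Main.v *)
Require Import Defs.
From Stdlib Require Import Reals List Lra Psatz.
Open Scope R_scope.
Lemma F_mono th x y x' y' : 0 <= th < 1 -> 0 <= x <= x' -> 0 <= y' <= y ->
  F x y th <= F x' y' th.
Proof.
  intros Ht Hx Hy. unfold F.
  apply (Rmult_le_reg_r ((1+x+y)*(1+x'+y'))). nra.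
  field_simplify; try lra.
  assert (H: (1+x+th*y)*(1+x'+y') <= (1+x'+th*y')*(1+x+y)).
  { assert (0 <= (1-th)*((x'-x)*y + (1+x)*(y-y'))) by
      (apply Rmult_le_pos; [lra| nra]). nra. }
  nra.
Qed.

Lemma F_pos th x y : 0 <= th -> 0 <= x -> 0 <= y -> 0 < F x y th.
Proof. intros. unfold F. apply Rdiv_lt_0_compat; nra. Qed.

Lemma F_le1 th x y : th < 1 -> 0 <= x -> 0 <= y -> F x y th <= 1.
Proof. intros. unfold F. apply (Rmult_le_reg_r (1+x+y)). lra.
  field_simplify; nra. Qed.

Lemma sol_props th lam a b : 0 < th < 1 -> 0 < lam -> 0 < a < b ->
  a = lam * F a b th ^ 2 -> b = lam * F b a th ^ 2 ->
  let u := F a b th in let v := F b a th in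
  0 < u /\ u < v /\
  lam * (u+v)^2 - (1+th)*lam*(u+v) - 1 = 0 /\
  lam * (u^2+v^2) = (1-th)*lam*(u+v) - 1.
Proof.
  intros Ht Hl Hab Ha Hb u v.
  assert (Hu : 0 < u) by (apply F_pos; lra).
  assert (Hv : 0 < v) by (apply F_pos; lra).
  assert (Huv : u < v).
  { destruct (Rlt_or_le u v) as [h|h]; auto. exfalso.
    fold u v in Ha, Hb.
    assert (v*v <= u*u) by nra. assert (lam*(v*v) <= lam*(u*u)) by nra. nra. }
  fold u v in Ha, Hb.
  assert (E1 : u * (1+a+b) = 1+a+th*b) by (unfold u, F; field; lra).
  assert (E2 : v * (1+a+b) = 1+b+th*a) by (unfold v, F; field; lra).
  assert (D : 1+a+b = (1-th)*lam*(u+v)).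
  { apply (Rmult_eq_reg_l (u-v)); [| lra].
    transitivity ((1-th)*(a-b)); [nra|]. rewrite Ha, Hb. ring. }
  assert (E3 : (u+v)*(1+a+b) = 2 + (1+th)*(a+b)) by lra.
  assert (Q : lam*(u^2+v^2) = (1-th)*lam*(u+v) - 1) by (rewrite Ha, Hb in D; nra).
  repeat split; auto.
  rewrite D in E3. rewrite Ha, Hb in E3.
  apply (Rmult_eq_reg_l (1-th)); [|lra]. nra.
Qed.

Lemma sol_unique th lam a b c d : 0 < th < 1 -> 0 < lam -> 0 < a < b -> 0 < c < d ->
  a = lam * F a b th ^ 2 -> b = lam * F b a th ^ 2 ->
  c = lam * F c d th ^ 2 -> d = lam * F d c th ^ 2 -> a = c /\ b = d.
Proof.
  intros Ht Hl Hab Hcd Ha Hb Hc Hd.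
  destruct (sol_props th lam a b Ht Hl Hab Ha Hb) as (Hu1&Huv1&S1&Q1).
  destruct (sol_props th lam c d Ht Hl Hcd Hc Hd) as (Hu2&Huv2&S2&Q2).
  set (u1 := F a b th) in *. set (v1 := F b a th) in *.
  set (u2 := F c d th) in *. set (v2 := F d c th) in *.
  assert (Hs : u1+v1 = u2+v2).
  { assert (h: (u1+v1-(u2+v2))*(lam*(u1+v1+(u2+v2)) - (1+th)*lam) = 0) by nra.
    destruct (Rmult_integral _ _ h) as [h1|h1]; [lra|].
    exfalso. assert (u2+v2 = 1+th - (u1+v1)) by (apply (Rmult_eq_reg_l lam); nra).
    assert (lam*(u1+v1)*(u2+v2) = -1) by (rewrite H; nra).
    assert (0 < lam*(u1+v1)*(u2+v2)) by (apply Rmult_lt_0_compat; [apply Rmult_lt_0_compat|]; lra).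
    lra. }
  assert (Hq : u1^2+v1^2 = u2^2+v2^2).
  { apply (Rmult_eq_reg_l lam); [|lra]. rewrite Q1, Q2, Hs. ring. }
  assert (Hp : u1*v1 = u2*v2) by nra.
  assert (h : (u1-u2)*(u1-v2) = 0) by nra.
  destruct (Rmult_integral _ _ h) as [h1|h1].
  - assert (u1 = u2) by lra. assert (v1 = v2) by lra.
    split; [rewrite Ha, Hc | rewrite Hb, Hd]; fold u1 u2 v1 v2; congruence.
  - exfalso. assert (v1 = u2) by lra. lra.
Qed.

Fixpoint ab (lam th : R) (n : nat) : R * R :=
  match n with
  | O => (0, lam)
  | Datatypes.S m => let p := ab lam th m in
           (lam * F (fst p) (snd p) th ^ 2, lam * F (snd p) (fst p) th ^ 2)
  end.

Lemma lim_le u l c : Un_cv u l -> (forall n, u n <= c) -> l <= c.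
Proof.
  intros Hu Hc. destruct (Rle_or_lt l c) as [h|h]; auto.
  destruct (Hu (l - c)) as [N HN]; [lra|].
  specialize (HN N (le_n N)). specialize (Hc N). unfold Rdist in HN.
  apply Rabs_def2 in HN. lra.
Qed.

Lemma lim_ge u l c : Un_cv u l -> (forall n, c <= u n) -> c <= l.
Proof.
  intros Hu Hc. destruct (Rle_or_lt c l) as [h|h]; auto.
  destruct (Hu (c - l)) as [N HN]; [lra|].
  specialize (HN N (le_n N)). specialize (Hc N). unfold Rdist in HN.
  apply Rabs_def2 in HN. lra.
Qed.

Theorem mainTheorem16 (theta lambda x1s x2s : R) (z1 z2 : vertex -> R) :
  0 < theta -> theta < 1/3 ->
  lambda > 9 / (4 * (1 - 3 * theta)) ->
  0 < x1s -> x1s < x2s ->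
  x1s = lambda * (F x1s x2s theta) ^ 2 ->
  x2s = lambda * (F x2s x1s theta) ^ 2 ->
  (forall i, 0 < z1 i) -> (forall i, 0 < z2 i) ->
  (forall i, z1 i = lambda * prod_succ (fun j => F (z1 j) (z2 j) theta) i) ->
  (forall i, z2 i = lambda * prod_succ (fun j => F (z2 j) (z1 j) theta) i) ->
  forall i, x1s <= z1 i <= x2s /\ x1s <= z2 i <= x2s.
Proof.
  intros Ht0 Ht1 Hlam Hx1 Hx12 Ex1 Ex2 Hz1 Hz2 Ez1 Ez2.
  assert (Hl : 0 < lambda).
  { assert (0 < 9 / (4 * (1 - 3 * theta))) by (apply Rdiv_lt_0_compat; lra). lra. }
  assert (Ht : 0 < theta < 1) by lra.
  assert (Ht' : 0 <= theta < 1) by lra.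
  set (a := fun n => fst (ab lambda theta n)).
  set (b := fun n => snd (ab lambda theta n)).
  assert (Ea : forall n, a (Datatypes.S n) = lambda * F (a n) (b n) theta ^ 2) by reflexivity.
  assert (Eb : forall n, b (Datatypes.S n) = lambda * F (b n) (a n) theta ^ 2) by reflexivity.
  assert (Hx2l : x2s <= lambda).
  { rewrite Ex2. assert (0 < F x2s x1s theta) by (apply F_pos; lra).
    assert (F x2s x1s theta <= 1) by (apply F_le1; lra).
    assert (F x2s x1s theta ^ 2 <= 1) by (simpl; nra). nra. }
  assert (Step : forall lo hi i, 0 <= lo <= hi ->
     (forall j, lo <= z1 j <= hi /\ lo <= z2 j <= hi) ->
     lambda * F lo hi theta ^ 2 <= z1 i <= lambda * F hi lo theta ^ 2 /\
     lambda * F lo hi theta ^ 2 <= z2 i <= lambda * F hi lo theta ^ 2).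
  { intros lo hi i Hlh Hj.
    rewrite (Ez1 i), (Ez2 i). unfold prod_succ; simpl.
    destruct (Hj (true :: i)) as [[A1 A2] [A3 A4]].
    destruct (Hj (false :: i)) as [[B1 B2] [B3 B4]].
    assert (P0 : 0 < F lo hi theta) by (apply F_pos; lra).
    assert (M1 : F lo hi theta <= F (z1 (true::i)) (z2 (true::i)) theta) by (apply F_mono; lra).
    assert (M2 : F lo hi theta <= F (z1 (false::i)) (z2 (false::i)) theta) by (apply F_mono; lra).
    assert (M3 : F lo hi theta <= F (z2 (true::i)) (z1 (true::i)) theta) by (apply F_mono; lra).
    assert (M4 : F lo hi theta <= F (z2 (false::i)) (z1 (false::i)) theta) by (apply F_mono; lra).
    assert (N1 : F (z1 (true::i)) (z2 (true::i)) theta <= F hi lo theta) by (apply F_mono; lra).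
    assert (N2 : F (z1 (false::i)) (z2 (false::i)) theta <= F hi lo theta) by (apply F_mono; lra).
    assert (N3 : F (z2 (true::i)) (z1 (true::i)) theta <= F hi lo theta) by (apply F_mono; lra).
    assert (N4 : F (z2 (false::i)) (z1 (false::i)) theta <= F hi lo theta) by (apply F_mono; lra).
    simpl; rewrite ?Rmult_1_r.
    repeat split; apply Rmult_le_compat_l; try lra.
    all: apply Rmult_le_compat; lra. }
  assert (Inv : forall n, 0 <= a n /\ a n <= a (Datatypes.S n) /\ a n <= x1s /\
                  x2s <= b n /\ b (Datatypes.S n) <= b n /\
                  forall i, a n <= z1 i <= b n /\ a n <= z2 i <= b n).
  { induction n as [|n IH].
    - rewrite Ea, Eb. change (a 0%nat) with 0. change (b 0%nat) with lambda.
      assert (0 < F 0 lambda theta) by (apply F_pos; lra).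
      assert (F lambda 0 theta <= 1) by (apply F_le1; lra).
      assert (F lambda 0 theta ^ 2 <= 1) by (simpl; assert (0 < F lambda 0 theta) by (apply F_pos; lra); nra).
      split; [lra|]. split; [simpl; nra|]. split; [lra|]. split; [lra|]. split; [nra|].
      intro i. repeat split.
      + specialize (Hz1 i). lra.
      + specialize (Ez1 i). unfold prod_succ in Ez1; simpl in Ez1.
        assert (F (z1 (true :: i)) (z2 (true :: i)) theta <= 1) by
          (apply F_le1; [lra| left; apply Hz1 | left; apply Hz2]).
        assert (F (z1 (false :: i)) (z2 (false :: i)) theta <= 1) by
          (apply F_le1; [lra| left; apply Hz1 | left; apply Hz2]).
        assert (0 < F (z1 (false :: i)) (z2 (false :: i)) theta) by
          (apply F_pos; [lra| left; apply Hz1 | left; apply Hz2]).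
        assert (0 < F (z1 (true :: i)) (z2 (true :: i)) theta) by
          (apply F_pos; [lra| left; apply Hz1 | left; apply Hz2]).
        assert (0 < F (z1 (false :: i)) (z2 (false :: i)) theta) by
          (apply F_pos; [lra| left; apply Hz1 | left; apply Hz2]).
        rewrite Ez1, Rmult_1_r. assert (h: F (z1 (true :: i)) (z2 (true :: i)) theta * F (z1 (false :: i)) (z2 (false :: i)) theta <= 1)
           by nra.
        nra.
      + specialize (Hz2 i). lra.
      + specialize (Ez2 i). unfold prod_succ in Ez2; simpl in Ez2.
        assert (F (z2 (true :: i)) (z1 (true :: i)) theta <= 1) by
          (apply F_le1; [lra| left; apply Hz2 | left; apply Hz1]).
        assert (F (z2 (false :: i)) (z1 (false :: i)) theta <= 1) by
          (apply F_le1; [lra| left; apply Hz2 | left; apply Hz1]).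
        assert (0 < F (z2 (true :: i)) (z1 (true :: i)) theta) by
          (apply F_pos; [lra| left; apply Hz2 | left; apply Hz1]).
        assert (0 < F (z2 (false :: i)) (z1 (false :: i)) theta) by
          (apply F_pos; [lra| left; apply Hz2 | left; apply Hz1]).
        rewrite Ez2, Rmult_1_r. assert (h: F (z2 (true :: i)) (z1 (true :: i)) theta * F (z2 (false :: i)) (z1 (false :: i)) theta <= 1)
           by nra.
        nra.
    - destruct IH as (H0 & H1 & H2 & H3 & H4 & H5).
      assert (Hbs : 0 <= b (Datatypes.S n)).
      { rewrite Eb. assert (0 < F (b n) (a n) theta) by (apply F_pos; lra). simpl; nra. }
      assert (P0 : 0 < F (a n) (b n) theta) by (apply F_pos; lra).
      assert (M1 : F (a n) (b n) theta <= F (a (Datatypes.S n)) (b (Datatypes.S n)) theta) by (apply F_mono; lra).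
      assert (M2 : F (b (Datatypes.S n)) (a (Datatypes.S n)) theta <= F (b n) (a n) theta) by (apply F_mono; lra).
      assert (M3 : F (a n) (b n) theta <= F x1s x2s theta) by (apply F_mono; lra).
      assert (M4 : F x2s x1s theta <= F (b n) (a n) theta) by (apply F_mono; lra).
      assert (0 < F x2s x1s theta) by (apply F_pos; lra).
      assert (0 < F (b (Datatypes.S n)) (a (Datatypes.S n)) theta) by (apply F_pos; lra).
      split; [lra|]. split.
      { rewrite (Ea (Datatypes.S n)); rewrite (Ea n) at 1. apply Rmult_le_compat_l; [lra|]. apply pow_incr; lra. }
      split.
      { rewrite (Ea n); rewrite Ex1 at 1. apply Rmult_le_compat_l; [lra|]. apply pow_incr; lra. }
      split.
      { rewrite (Eb n); rewrite Ex2 at 1. apply Rmult_le_compat_l; [lra|]. apply pow_incr; lra. }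
      split.
      { rewrite (Eb (Datatypes.S n)); rewrite (Eb n) at 2. apply Rmult_le_compat_l; [lra|]. apply pow_incr; lra. }
      intro i. rewrite (Ea n), (Eb n). apply (Step (a n) (b n) i); [lra|auto]. }
  assert (Ga : Un_growing a) by (intro n; apply Inv).
  assert (Db : Un_decreasing b) by (intro n; apply Inv).
  destruct (growing_cv a Ga) as [La HLa].
  { exists x1s. intros y [n ->]. destruct (Inv n) as (_&_&h&_). lra. }
  destruct (decreasing_cv b Db) as [Lb HLb].
  { exists (- x2s). intros y [n ->]. unfold opp_seq. destruct (Inv n) as (_&_&_&h&_). lra. }
  assert (La1 : La <= x1s) by (apply (lim_le a La x1s HLa); intro n; destruct (Inv n) as (_&_&h&_); lra).
  assert (Lb2 : x2s <= Lb) by (apply (lim_ge b Lb x2s HLb); intro n; destruct (Inv n) as (_&_&_&h&_); lra).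
  assert (La0 : 0 < La).
  { apply (Rlt_le_trans _ (a 1%nat)); [| apply growing_ineq; auto].
    rewrite Ea. change (a 0%nat) with 0. change (b 0%nat) with lambda.
    assert (0 < F 0 lambda theta) by (apply F_pos; lra). apply Rmult_lt_0_compat; [lra| apply pow_lt; lra]. }
  assert (Cv : forall (u v : nat -> R) lu lv,
     Un_cv u lu -> Un_cv v lv -> (forall n, u (Datatypes.S n) = lambda * F (u n) (v n) theta ^ 2) ->
     (forall n, 0 <= u n) -> (forall n, 0 <= v n) -> 0 <= lu -> 0 <= lv ->
     lu = lambda * F lu lv theta ^ 2).
  { intros u v lu lv Hu Hv Hs Hun Hvn Hlu Hlv.
    assert (K1 : Un_cv (fun n => u (Datatypes.S n) * ((1 + u n + v n) * (1 + u n + v n)))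
                  (lu * ((1 + lu + lv) * (1 + lu + lv)))).
    { apply CV_mult.
      - apply (Un_cv_ext (fun n => u (n + 1)%nat)); [intro n; f_equal; lia | apply CV_shift'; auto].
      - assert (Un_cv (fun n => 1 + u n + v n) (1 + lu + lv)).
        { apply CV_plus; [apply CV_plus|]; auto. intros e he. exists 0%nat. intros.
          unfold Rdist. rewrite Rminus_diag, Rabs_R0. lra. }
        apply CV_mult; auto. }
    assert (K2 : Un_cv (fun n => lambda * ((1 + u n + theta * v n) * (1 + u n + theta * v n)))
                  (lambda * ((1 + lu + theta * lv) * (1 + lu + theta * lv)))).
    { assert (Cc : forall c, Un_cv (fun _ => c) c).
      { intros c e he. exists 0%nat. intros. unfold Rdist. rewrite Rminus_diag, Rabs_R0. lra. }
      assert (Cs : forall (w : nat -> R) c l, Un_cv w l -> Un_cv (fun n => c * w n) (c * l)).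
      { intros w c l Hw. apply CV_mult; auto. }
      apply Cs.
      assert (Un_cv (fun n => 1 + u n + theta * v n) (1 + lu + theta * lv)).
      { apply CV_plus; [apply CV_plus|]; auto. }
      apply CV_mult; auto. }
    assert (Eq : forall n, u (Datatypes.S n) * ((1 + u n + v n) * (1 + u n + v n)) =
                 lambda * ((1 + u n + theta * v n) * (1 + u n + theta * v n))).
    { intro n. rewrite Hs. unfold F.
      assert (0 < 1 + u n + v n).
      { specialize (Hun n); specialize (Hvn n); lra. }
      field. lra. }
    assert (K3 := UL_sequence _ _ _ K1 (Un_cv_ext _ _ (fun n => eq_sym (Eq n)) _ K2)).
    unfold F. apply (Rmult_eq_reg_r ((1 + lu + lv) * (1 + lu + lv))).
    2: { apply Rgt_not_eq. nra. }
    rewrite K3. field. lra. }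
  assert (An : forall n, 0 <= a n) by (intro n; apply Inv).
  assert (Bn : forall n, 0 <= b n).
  { intro n. destruct (Inv n) as (_&_&_&h&_). lra. }
  assert (Fa := Cv a b La Lb HLa HLb Ea An Bn ltac:(lra) ltac:(lra)).
  assert (Fb := Cv b a Lb La HLb HLa Eb Bn An ltac:(lra) ltac:(lra)).
  destruct (sol_unique theta lambda La Lb x1s x2s Ht Hl ltac:(lra) ltac:(lra) Fa Fb Ex1 Ex2)
    as [<- <-].
  intro i. repeat split.
  - apply (lim_le a La (z1 i) HLa). intro n. destruct (Inv n) as (_&_&_&_&_&h). apply h.
  - apply (lim_ge b Lb (z1 i) HLb). intro n. destruct (Inv n) as (_&_&_&_&_&h). apply h.
  - apply (lim_le a La (z2 i) HLa). intro n. destruct (Inv n) as (_&_&_&_&_&h). apply h.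
  - apply (lim_ge b Lb (z2 i) HLb). intro n. destruct (Inv n) as (_&_&_&_&_&h). apply h.
Qed.
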